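(* Let $\mathcal{A}$ be a pOC with state set $Q$ whose underlying chain $\mathcal{X}$, with transition matrix $A$, is strongly connected. Let $\alpha$ be the invariant distribution of $\mathcal{X}$, $s$ the vector of expected counter changes, and $t=\alpha s$ the trend. Then: (a) With $W:=\mathbf{1}\alpha$, i.e., the matrix each of whose rows equals $\alpha$, the matrix $Z:=(I-A+W)^{-1}$ exists and $Zs$ is a potential. (b) There exists a potential $v$ with $v_{\max}-v_{\min}\le 2|Q|/x_{\min}^{|Q|}$, where $x_{\min}$ is the smallest nonzero entry of $A$.
   Context: A pOC has finite state set $Q$ and positive rules $\delta^{>0}\subseteq Q\times\{-1,0,1\}\times Q$ with probabilities $P^{>0}$, which form a positive probability distribution over the outgoing positive rules of each state. $\mathcal{X}$ is the finite Markov chain on $Q$ with transition matrix $A_{pq}=\sum_cP^{>0}(p,c,q)$. $s_p=\sum_{(p,c,q)\in\delta^{>0}}P^{>0}(p,c,q)\cdot c$. A potential is any vector $v\in\mathbb{R}^Q$ satisfying $s+Av=v+\mathbf{1}t$, where $\mathbf{1}$ is the all-ones vector. $v_{\max}$ and $v_{\min}$ denote the largest and smallest components of $v$. *)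

(* Defs.v *)
From HB Require Import structures.
From mathcomp Require Import all_boot all_order all_algebra.
From mathcomp Require Import reals.
Set Implicit Arguments. Unset Strict Implicit. Unset Printing Implicit Defensive.
Import Order.TTheory GRing.Theory Num.Theory.
Local Open Scope ring_scope.

(* States are 'I_n (so |Q| = n); counter changes {-1,0,1} are encoded by
   c : 'I_3 with value c - 1. *)
Definition cval {R : pzRingType} (c : 'I_3) : R := (c%:R - 1).

(* A pOC restricted to its positive rules delta^{>0} with probabilities P^{>0}. *)
Record pOC (R : realType) (n : nat) := {
  delta : {set 'I_n * 'I_3 * 'I_n};
  prob : 'I_n -> 'I_3 -> 'I_n -> R;
  prob_pos : forall p c q, (p, c, q) \in delta -> 0 < prob p c q;
  prob_sum : forall p : 'I_n,
      \sum_(r in delta | r.1.1 == p) prob r.1.1 r.1.2 r.2 = 1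
}.

Definition chainA (R : realType) n (M : pOC R n) : 'M[R]_n :=
  \matrix_(p, q) \sum_(c < 3 | (p, c, q) \in delta M) prob M p c q.

Definition svec (R : realType) n (M : pOC R n) : 'cV[R]_n :=
  \col_p \sum_(r in delta M | r.1.1 == p) prob M r.1.1 r.1.2 r.2 * cval r.1.2.

Definition strongly_connected (R : realType) n (A : 'M[R]_n) : Prop :=
  forall p q : 'I_n, connect [rel i j | 0 < A i j] p q.

Definition invariant_distribution (R : realType) n (A : 'M[R]_n) (alpha : 'rV[R]_n) : Prop :=
  alpha *m A = alpha /\ (forall i, 0 <= alpha 0 i) /\ \sum_i alpha 0 i = 1.

Definition potential (R : realType) n (A : 'M[R]_n) (s : 'cV[R]_n) (t : R) (v : 'cV[R]_n) : Prop :=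
  s + A *m v = v + const_mx t.

(* smallest nonzero entry of A (entries of a stochastic matrix are <= 1) *)
Definition xmin (R : realType) n (A : 'M[R]_n) : R :=
  \big[Num.min/1]_(ij : 'I_n * 'I_n | A ij.1 ij.2 != 0) A ij.1 ij.2.

(* Main.v *)
Require Import Defs.
From HB Require Import structures.
From mathcomp Require Import all_boot all_order all_algebra.
From mathcomp Require Import reals.
From mathcomp Require Import ring lra.
Import Order.TTheory GRing.Theory Num.Theory.
Local Open Scope ring_scope.

Section Aux.
Variables (R : realType) (n : nat) (M : pOC R n).

Lemma A_ge0 i j : 0 <= chainA M i j.
Proof.
rewrite mxE; apply: sumr_ge0 => c Hc; exact: ltW (prob_pos Hc).
Qed.

Lemma rowsum i : \sum_j chainA M i j = 1.
Proof.
rewrite -(prob_sum M i).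
transitivity (\sum_a \sum_(c < 3) \sum_q
   (if ((a, c, q) \in delta M) && (a == i) then prob M a c q else 0)); last first.
  rewrite pair_big pair_big /=.
  by rewrite [RHS]big_mkcond; apply: eq_bigr => [[[a c] q]] _.
rewrite [RHS](bigD1 i) //= [X in _ + X]big1 ?addr0; last first.
  move=> a Ha; apply: big1 => c _; apply: big1 => q _.
  by rewrite (negbTE Ha) andbF.
rewrite exchange_big /=; apply: eq_bigr => q _.
rewrite mxE big_mkcond /=; apply: eq_bigr => c _.
by rewrite eqxx andbT.
Qed.

Lemma cval_bound (c : 'I_3) : `|cval c : R| <= 1.
Proof.
rewrite /cval; case: c => [[|[|[|]]] //= _].
- by rewrite sub0r normrN normr1.
- by rewrite subrr normr0.
- by rewrite -addrA subrr addr0 normr1.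
Qed.

Lemma s_bound i : `|svec M i 0| <= 1.
Proof.
rewrite mxE -(prob_sum M i).
apply: le_trans (ler_norm_sum _ _ _) _.
apply: ler_sum => r /andP[Hr _].
rewrite normrM (ger0_norm (ltW (prob_pos _))); last by case: r Hr => [[a c] q].
rewrite -[X in _ <= X]mulr1; apply: ler_wpM2l; last exact: cval_bound.
by apply: ltW; case: r Hr => [[a c] q]; exact: prob_pos.
Qed.

Lemma xmin_gt0 : 0 < xmin (chainA M).
Proof.
rewrite /xmin; elim/big_rec: _ => [|ij x Hij Hx]; first exact: ltr01.
rewrite lt_min Hx andbT lt_def Hij; exact: A_ge0.
Qed.

Lemma xmin_le i j : 0 < chainA M i j -> xmin (chainA M) <= chainA M i j.
Proof.
move=> H; rewrite /xmin.
exact: (@bigmin_le_cond _ _ _ _ (i, j) (fun ij => chainA M ij.1 ij.2 != 0) (fun ij => chainA M ij.1 ij.2)) (lt0r_neq0 H).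
Qed.

Lemma xmin_le1 : xmin (chainA M) <= 1.
Proof. exact: bigmin_le_id. Qed.

End Aux.

Section Path.
Variables (R : realType) (n : nat) (A : 'M[R]_n).

Lemma path_bound (g : 'I_n -> R) (K c : R) : 0 <= K ->
  (forall x y, 0 < A x y -> g y <= K * (g x + c)) ->
  forall p x, path [rel i j | 0 < A i j] x p ->
  g (last x p) <= K ^+ size p * g x + c * \sum_(i < size p) K ^+ i.+1.
Proof.
move=> K0 HK; elim=> [|y p IH] x /=.
  by rewrite big_ord0 mulr0 addr0 expr0 mul1r.
move=> /andP[Hxy Hp]; apply: le_trans (IH _ Hp) _.
rewrite big_ord_recr /=.
have H1 := HK _ _ Hxy.
have H2 : K ^+ size p * g y <= K ^+ size p * (K * (g x + c)).
  by apply: ler_wpM2l => //; exact: exprn_ge0.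
apply: le_trans (lerD H2 (lexx _)) _.
rewrite exprSr le_eqVlt; apply/orP; left; apply/eqP; ring.
Qed.

Lemma conn_bound (g : 'I_n -> R) (K c : R) : 1 <= K -> 0 <= c ->
  (forall x y, 0 < A x y -> g y <= K * (g x + c)) ->
  forall x y, g x = 0 -> connect [rel i j | 0 < A i j] x y ->
  g y <= c * (n%:R * K ^+ n).
Proof.
move=> K1 c0 HK x y gx /connectP[p Hp ->].
case: (shortenP Hp) => p' Hp' Hu _.
have Hs : (size p' < n)%N.
  have := max_card (mem (x :: p')); rewrite card_ord (card_uniqP Hu) //.
apply: le_trans (@path_bound g K c (le_trans ler01 K1) HK _ _ Hp') _.
rewrite gx mulr0 add0r; apply: ler_wpM2l => //.
apply: le_trans (_ : \sum_(i < size p') K ^+ n <= _).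
  apply: ler_sum => i _; apply: ler_weXn2l => //.
  by apply: leq_trans (ltn_ord i) (ltnW Hs).
rewrite sumr_const card_ord [X in _ <= X]mulrC mulr_natr; apply: ler_wpMn2l.
  exact: exprn_ge0 (le_trans ler01 K1).
exact: ltnW.
Qed.

End Path.
Section Main.
Variables (R : realType) (n : nat) (M : pOC R n).
Local Notation A := (chainA M).

Lemma gap_edge (g : 'I_n -> R) (c : R) :
  (forall j, 0 <= g j) ->
  (forall x, \sum_j A x j * g j <= g x + c) ->
  forall x y, 0 < A x y -> g y <= (xmin A)^-1 * (g x + c).
Proof.
move=> g0 Hs x y Hxy.
have xm := @xmin_gt0 _ _ M.
rewrite -(ler_pM2l xm) mulrA mulfV ?mul1r ?lt0r_neq0 //.
apply: le_trans (Hs x).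
apply: le_trans (_ : A x y * g y <= _).
  by apply: ler_wpM2r => //; exact: (@xmin_le _ _ M).
rewrite (bigD1 y) //= lerDl; apply: sumr_ge0 => j _.
by apply: mulr_ge0 => //; exact: (@A_ge0 _ _ M).
Qed.

Lemma K_ge1 : 1 <= (xmin A)^-1.
Proof. by rewrite invf_ge1 ?(@xmin_gt0 _ _ M) ?(@xmin_le1 _ _ M). Qed.

Lemma harmonic_const (SC : strongly_connected A) (x : 'cV[R]_n) :
  A *m x = x -> forall i j, x i 0 = x j 0.
Proof.
move=> Hx i j.
have [i0 _ Hmax] := @arg_maxP _ R _ i xpredT (fun k => x k 0) isT.
set g := fun k => x i0 0 - x k 0.
have g0 : forall k, 0 <= g k by move=> k; rewrite subr_ge0; exact: Hmax.
have Hs : forall k, \sum_l A k l * g l <= g k + 0.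
  move=> k; rewrite addr0 le_eqVlt; apply/orP; left; apply/eqP.
  rewrite /g; under eq_bigr do rewrite mulrBr.
  rewrite sumrB -mulr_suml (@rowsum _ _ M) mul1r.
  by move/matrixP: Hx => /(_ k 0); rewrite mxE => ->.
have key : forall k, g k = 0.
  move=> k; apply/eqP; rewrite eq_le g0 andbT.
  have := @conn_bound _ _ A _ _ _ K_ge1 (lexx 0) (@gap_edge g 0 g0 Hs) _ _ (subrr _) (SC i0 k).
  by rewrite mul0r.
have := key i; have := key j; rewrite /g => /eqP; rewrite subr_eq0 => /eqP <-.
by move=> /eqP; rewrite subr_eq0 => /eqP <-.
Qed.

End Main.

Theorem mainTheorem9 (R : realType) (n : nat) (M : pOC R n) (alpha : 'rV[R]_n) :
  strongly_connected (chainA M) ->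
  invariant_distribution (chainA M) alpha ->
  let A := chainA M in
  let s := svec M in
  let t := (alpha *m s) 0 0 in
  let W := const_mx 1 *m alpha : 'M[R]_n in
  ((1%:M - A + W) \in unitmx /\ potential A s t (invmx (1%:M - A + W) *m s)) /\
  (exists v : 'cV[R]_n, potential A s t v /\
     forall p q : 'I_n, v p 0 - v q 0 <= 2 * n%:R / (xmin A) ^+ n).
Proof.
move=> SC [aA [a0 a1]] A s t W.
set B := 1%:M - A + W.
have a1m : alpha *m (const_mx 1 : 'cV[R]_n) = 1%:M.
  apply/matrixP => i j; rewrite !ord1 !mxE.
  by under eq_bigr do rewrite mxE mulr1.
have aB : alpha *m B = alpha.
  by rewrite /B /W !mulmxDr mulmxN mulmx1 aA subrr add0r mulmxA a1m mul1mx.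
have Bunit : B \in unitmx.
  rewrite -unitmx_tr -row_free_unit; apply: inj_row_free => u Hu.
  set x := u^T.
  have Bx : B *m x = 0 by rewrite -[B]trmxK -trmx_mul Hu trmx0.
  have ax : alpha *m x = 0 by rewrite -aB -mulmxA Bx mulmx0.
  have Ax : A *m x = x.
    move: Bx; rewrite /B /W !mulmxDl mulNmx mul1mx -mulmxA ax mulmx0 addr0.
    by move/eqP; rewrite subr_eq0 => /eqP <-.
  have Hc := @harmonic_const _ _ M SC _ Ax.
  have x0 : forall i, x i 0 = 0.
    move=> i; move/matrixP: ax => /(_ 0 0); rewrite mxE [RHS]mxE => H.
    rewrite -[RHS]H -(mul1r (x i 0)) -a1 mulr_suml; apply: eq_bigr => k _.
    by rewrite (Hc k i).
  apply/matrixP => a b; rewrite ord1 [RHS]mxE.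
  by have := x0 b; rewrite /x mxE.
set v := invmx B *m s.
have av : alpha *m v = alpha *m s.
  by rewrite /v mulmxA -{1}aB mulmxK.
have Wv : W *m v = const_mx t.
  apply/matrixP => i j; rewrite ord1 /W -mulmxA av !mxE big_ord1 !mxE mul1r.
  by rewrite /t mxE.
have Bv : B *m v = s by rewrite /v mulKVmx.
have pot : potential A s t v.
  rewrite /potential -Wv -{1}Bv /B !mulmxDl mulNmx mul1mx.
  by rewrite addrAC subrK.
split; first by split.
clearbody v.
exists v; split => // p q.
have [i0 _ Hmax] := @arg_maxP _ R _ p xpredT (fun k => v k 0) isT.
set g := fun k => v i0 0 - v k 0.
have g0 : forall k, 0 <= g k by move=> k; rewrite subr_ge0; exact: Hmax.
have tb : `|t| <= 1.
  rewrite /t mxE; apply: le_trans (ler_norm_sum _ _ _) _.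
  rewrite -a1; apply: ler_sum => k _.
  rewrite normrM ger0_norm // -[X in _ <= X]mulr1; apply: ler_wpM2l => //.
  exact: (@s_bound _ _ M).
have sb : forall k, `|s k 0| <= 1 := @s_bound _ _ M.
clearbody s t.
have Hs : forall k, \sum_l A k l * g l <= g k + 2.
  move=> k; rewrite /g; under eq_bigr do rewrite mulrBr.
  rewrite sumrB -mulr_suml (@rowsum _ _ M) mul1r.
  move/matrixP: pot => /(_ k 0); rewrite /potential !mxE => Hk.
  have -> : \sum_l A k l * v l 0 = v k 0 + t - s k 0 by rewrite -Hk addrAC subrr add0r.
  have := sb k; have := tb; rewrite !ler_norml => /andP[? ?] /andP[? ?].
  lra.
have := @conn_bound _ _ A _ _ _ (@K_ge1 _ _ M) (ler0n R 2) (@gap_edge _ _ M g 2 g0 Hs) _ _ (subrr _) (SC i0 q).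
have := g0 p; rewrite /g => ? ?.
apply: le_trans (_ : v i0 0 - v q 0 <= _); first lra.
apply: le_trans; first eassumption.
by rewrite exprVn mulrA.
Qed.
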